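(* Under the hypotheses and with the construction of the context (in particular $\lambda>0$ not a fusion value and $\|\boldsymbol\delta'_{ij}\|\le\lambda_1<\lambda$), the constructed primal–dual pair is strictly complementary: $$t_{ij}+\lambda>\|\mathbf y_{ij}+\boldsymbol\delta_{ij}\|\ \ (1\le i<j\le n),\qquad s_i+1-\gamma_i>\left\|\begin{pmatrix}\mathbf z_i+\boldsymbol\beta_i\\ u_i+\gamma_i\end{pmatrix}\right\|\ \ (1\le i\le n).$$
   Context: Data: $n\ge2$, $d\ge1$, $\mathbf a_i\in\mathbb R^d$, $r_i>0$. For $\lambda\ge0$, (P$_\lambda$): minimize $\frac12\sum_ir_i\|\mathbf x_i-\mathbf a_i\|^2+\lambda\sum_{i<j}r_ir_j\|\mathbf x_i-\mathbf x_j\|$; unique minimizer $\mathbf x^*(\lambda)$, whose clusters are the classes of $i\sim j\iff\mathbf x_i^*(\lambda)=\mathbf x_j^*(\lambda)$. $\lambda_0>0$ is a fusion value if some $i\ne j$ have $\mathbf x_i^*(\lambda_0)=\mathbf x_j^*(\lambda_0)$ but $\mathbf x_i^*(\lambda)\ne\mathbf x_j^*(\lambda)$ for all $\lambda<\lambda_0$. Fix $\lambda>0$ not a fusion value; $\lambda_1$ is the largest fusion value below $\lambda$ (or $0$); $C_1,\dots,C_K$ are the clusters of $\mathbf x^*(\lambda_1)$. $r'_k:=\sum_{i\in C_k}r_i$, $\bar{\mathbf a}_k:=\frac1{r'_k}\sum_{i\in C_k}r_i\mathbf a_i$; $(\hat{\mathbf x}_1,\dots,\hat{\mathbf x}_K)$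 is the minimizer of $\frac12\sum_kr'_k\|\mathbf x_k-\bar{\mathbf a}_k\|^2+\lambda\sum_{k<k'}r'_kr'_{k'}\|\mathbf x_k-\mathbf x_{k'}\|$. Antisymmetric notation $\mathbf v_{\langle ij\rangle}=\mathbf v_{ij}$ ($i<j$), $-\mathbf v_{ji}$ ($i>j$), $\mathbf 0$ ($i=j$). Given vectors $\boldsymbol\delta'_{ij}$ for $i<j$ in a common cluster with $\|\boldsymbol\delta'_{ij}\|\le\lambda_1$ and $\mathbf a_i-\bar{\mathbf a}_k=-\sum_{j\in C_k}r_j\boldsymbol\delta'_{\langle ij\rangle}$ for $i\in C_k$, the construction is: $\mathbf x^*_i:=\hat{\mathbf x}_k$ ($i\in C_k$), $\mathbf y_{ij}:=\mathbf x_i^*-\mathbf x_j^*$, $\mathbf z_i:=\mathbf x_i^*-\mathbf a_i$, $s_i:=\frac12(1+\|\mathbf z_i\|^2)$, $u_i:=\frac12(-1+\|\mathbf z_i\|^2)$, $t_{ij}:=\|\mathbf y_{ij}\|$, $\boldsymbol\delta_{ij}:=\boldsymbol\delta'_{ij}$ for same-cluster pairs and $\lambda(\mathbf x_j^*-\mathbf x_i^* )/\|\mathbf x_j^*-\mathbf x_i^*\|$ otherwise, $\boldsymbol\beta_i:=-\mathbf z_i$, $\gamma_i:=\frac12(1-\|\boldsymbol\beta_i\|^2)$. *)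

(* Defs.v *)
From HB Require Import structures.
From mathcomp Require Import all_boot all_order all_algebra.
From mathcomp Require Import reals.
Set Implicit Arguments. Unset Strict Implicit. Unset Printing Implicit Defensive.
Import Order.TTheory GRing.Theory Num.Theory.
Local Open Scope ring_scope.

Section Defs.
Variable R : realType.

Definition enorm (m : nat) (v : 'rV[R]_m) : R :=
  Num.sqrt (\sum_(i < m) v ord0 i ^+ 2).

Definition Pobj (n d : nat) (a : 'I_n -> 'rV[R]_d) (r : 'I_n -> R) (lam : R)
    (x : 'I_n -> 'rV[R]_d) : R :=
  2^-1 * (\sum_(i < n) r i * enorm (x i - a i) ^+ 2)
  + lam * (\sum_(i < n) \sum_(j < n | (i < j)%N) r i * r j * enorm (x i - x j)).

Definition is_minimizer (T : Type) (f : T -> R) (x : T) : Prop :=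
  forall y, f x <= f y.

Definition fusion_value (n d : nat) (xs : R -> 'I_n -> 'rV[R]_d) (lam0 : R) : Prop :=
  0 < lam0 /\
  exists i j : 'I_n, i != j /\ xs lam0 i = xs lam0 j /\
    (forall lam, 0 <= lam -> lam < lam0 -> xs lam i <> xs lam j).

Definition largest_fusion_below (n d : nat) (xs : R -> 'I_n -> 'rV[R]_d)
    (lam lam1 : R) : Prop :=
  (lam1 = 0 /\ forall mu, 0 < mu -> mu < lam -> ~ fusion_value xs mu) \/
  (fusion_value xs lam1 /\ lam1 < lam /\
     forall mu, lam1 < mu -> mu < lam -> ~ fusion_value xs mu).

(* cluster data: c i = k  iff  i in C_k *)
Definition rprime (n K : nat) (r : 'I_n -> R) (c : 'I_n -> 'I_K) (k : 'I_K) : R :=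
  \sum_(i < n | c i == k) r i.

Definition abar (n d K : nat) (a : 'I_n -> 'rV[R]_d) (r : 'I_n -> R)
    (c : 'I_n -> 'I_K) (k : 'I_K) : 'rV[R]_d :=
  (rprime r c k)^-1 *: \sum_(i < n | c i == k) r i *: a i.

Definition Qobj (n d K : nat) (a : 'I_n -> 'rV[R]_d) (r : 'I_n -> R)
    (c : 'I_n -> 'I_K) (lam : R) (x : 'I_K -> 'rV[R]_d) : R :=
  2^-1 * (\sum_(k < K) rprime r c k * enorm (x k - abar a r c k) ^+ 2)
  + lam * (\sum_(k < K) \sum_(k' < K | (k < k')%N)
             rprime r c k * rprime r c k' * enorm (x k - x k')).

Definition anti (n : nat) (V : zmodType) (v : 'I_n -> 'I_n -> V) (i j : 'I_n) : V :=
  if (i < j)%N then v i j else if (j < i)%N then - v j i else 0.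

Section Construction.
Variables (n d K : nat) (a : 'I_n -> 'rV[R]_d) (c : 'I_n -> 'I_K)
  (xhat : 'I_K -> 'rV[R]_d) (deltap : 'I_n -> 'I_n -> 'rV[R]_d) (lam : R).

Definition xst (i : 'I_n) : 'rV[R]_d := xhat (c i).
Definition yv (i j : 'I_n) : 'rV[R]_d := xst i - xst j.
Definition zv (i : 'I_n) : 'rV[R]_d := xst i - a i.
Definition sv (i : 'I_n) : R := 2^-1 * (1 + enorm (zv i) ^+ 2).
Definition uv (i : 'I_n) : R := 2^-1 * (-1 + enorm (zv i) ^+ 2).
Definition tv (i j : 'I_n) : R := enorm (yv i j).
Definition deltav (i j : 'I_n) : 'rV[R]_d :=
  if c i == c j then deltap i j
  else (lam / enorm (xst j - xst i)) *: (xst j - xst i).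
Definition betav (i : 'I_n) : 'rV[R]_d := - zv i.
Definition gammav (i : 'I_n) : R := 2^-1 * (1 - enorm (betav i) ^+ 2).
End Construction.

End Defs.

(* Main.v *)
Require Import Defs.
From HB Require Import structures.
From mathcomp Require Import all_boot all_order all_algebra.
From mathcomp Require Import reals.
From mathcomp Require Import lra.
Import Order.TTheory GRing.Theory Num.Theory.
Local Open Scope ring_scope.

Lemma enormZ (R : realType) (m : nat) (k : R) (v : 'rV[R]_m) :
  enorm (k *: v) = `|k| * enorm v.
Proof.
rewrite /enorm.
have -> : \sum_(i < m) (k *: v) ord0 i ^+ 2 = k ^+ 2 * \sum_(i < m) v ord0 i ^+ 2.
  rewrite mulr_sumr; apply: eq_bigr => i _; rewrite mxE exprMn //.
rewrite sqrtrM ?sqrtr_sqr //; exact: sqr_ge0.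
Qed.

Lemma enorm0 (R : realType) (m : nat) : enorm (0 : 'rV[R]_m) = 0.
Proof. by have := @enormZ R m 0 0; rewrite scale0r normr0 mul0r. Qed.

Lemma enormN (R : realType) (m : nat) (v : 'rV[R]_m) : enorm (- v) = enorm v.
Proof. by rewrite -scaleN1r enormZ normrN normr1 mul1r. Qed.

Lemma enorm_ge0 (R : realType) (m : nat) (v : 'rV[R]_m) : 0 <= enorm v.
Proof. exact: sqrtr_ge0. Qed.

Theorem lemma6p5 (R : realType) (n d : nat) (a : 'I_n -> 'rV[R]_d) (r : 'I_n -> R)
  (xs : R -> 'I_n -> 'rV[R]_d) (lam lam1 : R) (K : nat) (c : 'I_n -> 'I_K)
  (xhat : 'I_K -> 'rV[R]_d) (deltap : 'I_n -> 'I_n -> 'rV[R]_d) :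
  (2 <= n)%N -> (1 <= d)%N ->
  (forall i, 0 < r i) ->
  (* xs mu is the (unique) minimizer of (P_mu) for every mu >= 0 *)
  (forall mu, 0 <= mu -> is_minimizer (Pobj a r mu) (xs mu)) ->
  0 < lam -> ~ fusion_value xs lam ->
  largest_fusion_below xs lam lam1 ->
  (* C_1, ..., C_K are the clusters of xs lam1 : i in C_k iff c i = k *)
  (forall k : 'I_K, exists i, c i = k) ->
  (forall i j, c i = c j <-> xs lam1 i = xs lam1 j) ->
  (* xhat is the minimizer of the reduced problem *)
  is_minimizer (Qobj a r c lam) xhat ->
  (forall i j : 'I_n, (i < j)%N -> c i = c j -> enorm (deltap i j) <= lam1) ->
  (forall i : 'I_n, a i - abar a r c (c i) =
      - \sum_(j < n | c j == c i) r j *: anti deltap i j) ->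
  (forall i j : 'I_n, (i < j)%N ->
      enorm (yv c xhat i j + deltav c xhat deltap lam i j) < tv c xhat i j + lam) /\
  (forall i : 'I_n,
      enorm (row_mx (zv a c xhat i + betav a c xhat i)
                    (uv a c xhat i + gammav a c xhat i)%:M)
      < sv a c xhat i + 1 - gammav a c xhat i).
Proof.
move=> _ _ _ _ lam0 _ hlf _ _ _ hdel _.
have l1 : lam1 < lam.
  by case: hlf => [[-> _]|[_ [h _]]].
split.
- move=> i j ij; rewrite /yv /tv /deltav /xst.
  rewrite /tv /yv /xst; case: eqP => [ec|nc].
    rewrite ec subrr add0r enorm0 add0r.
    exact: le_lt_trans (hdel i j ij ec) l1.
  set w := xhat (c i) - xhat (c j).
  have -> : xhat (c j) - xhat (c i) = - w by rewrite opprB.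
  rewrite enormN scalerN -{1}(scale1r w) -scalerBl enormZ.
  have := @enorm_ge0 R d w; rewrite le_eqVlt => /orP[/eqP <-|wp].
    by rewrite mulr0 add0r.
  rewrite -{3}(mul1r (enorm w)) -[X in _ < _ + X](mulfVK (lt0r_neq0 wp)) -mulrDl.
  rewrite ltr_pM2r //.
  rewrite (_ : lam * (enorm w)^-1 = lam / enorm w) //.
  have q : 0 < lam / enorm w by rewrite divr_gt0.
  rewrite ltr_norml; apply/andP; split.
    by rewrite opprD ltrD2r gtrN ?ltr01.
  by rewrite ltrD2l gtrN.
- move=> i; rewrite /betav /gammav /uv /sv enormN subrr.
  set e := enorm (zv a c xhat i).
  have -> : 2^-1 * (-1 + e ^+ 2) + 2^-1 * (1 - e ^+ 2) = 0 :> R.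
    by rewrite -mulrDr addrACA addNr subrr addr0 mulr0.
  rewrite (_ : (0 : R)%:M = 0) ?row_mx0 ?enorm0; last by rewrite -scalemx1 scale0r.
  have : 0 <= e ^+ 2 by exact: sqr_ge0.
  move: (e ^+ 2) => f hf; lra.
Qed.
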